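(* Let $T$ be a DAT with duration vector $d$, let $v$ be a module of $T$, and let $T^v$, $\tilde v$, $d^v$ be as defined below, and assume $\mathrm{mt}(T_v,d|_{B_v})<\infty$. Then for every successful attack $\mathcal{O}$ on $T^v$ there exists a successful attack $\mathcal{O}'$ on $T$ with $\mathrm{t}(\mathcal{O}',d)=\mathrm{t}(\mathcal{O},d^v)$.
   Context: A dynamic attack tree (DAT) is a finite rooted directed acyclic graph $T=(N,E)$ (edges point from a node to its children) with root $\mathrm{R}_T$, in which each node $v$ has a type $\gamma(v)\in\{\mathtt{BAS},\mathtt{OR},\mathtt{AND},\mathtt{SAND}\}$, with $\gamma(v)=\mathtt{BAS}$ if and only if $v$ is a leaf. Every node of type $\mathtt{SAND}$ comes with a fixed linear ordering $v_1,\dots,v_n$ of its children, written $v=\mathtt{SAND}(v_1,\dots,v_n)$; similarly one writes $v=\mathtt{OR}(v_1,\dots,v_n)$, $v=\mathtt{AND}(v_1,\dots,v_n)$. $N_\gamma$ denotes the set of nodes of type $\gamma$. For a node $v$, $T_v$ is the sub-DAG induced on the descendants of $v$ (all nodes reachable from $v$ by a directed path, including $v$), rooted at $v$, with the inherited types and orderings, and $B_v$ is the set of nodes of $T_v$ of type $\mathtt{BAS}$. A module of $T$ is a node $v\in N\setminus N_{\mathtt{BAS}}$ such that every directed path from a node outside $T_v$ to a node of $T_v$ passes through $v$; equivalently, every node of $T_v$ other than $v$ has all its parents inside $T_v$. An attack on $T$ is a pair $\mathcal{O}=(A,\prec)$ where $A\subseteq N_{\mathtt{BAS}}$ and $\prec$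 is a strict partial order on $A$. An attack $(A,\prec)$ reaches a node $v$, defined recursively: if $v\in N_{\mathtt{BAS}}$, iff $v\in A$; if $v=\mathtt{OR}(v_1,\dots,v_n)$, iff it reaches some $v_i$; if $v=\mathtt{AND}(v_1,\dots,v_n)$, iff it reaches all $v_i$; if $v=\mathtt{SAND}(v_1,\dots,v_n)$, iff it reaches all $v_i$ and for every $i<n$, every $a\in A\cap B_{v_i}$ and every $a'\in A\cap B_{v_{i+1}}$ one has $a\prec a'$. An attack is successful if it reaches the root. A duration vector is $d\in\mathbb{R}_{\ge0}^{N_{\mathtt{BAS}}}$. For an attack $\mathcal{O}=(A,\prec)$, $\mathrm{t}(\mathcal{O},d)=\max_C\sum_{a\in C}d_a$, the maximum over all maximal chains $C$ of $(A,\prec)$ (equal to $0$ if $A=\varnothing$). The min time $\mathrm{mt}(T,d)$ is the minimum of $\mathrm{t}(\mathcal{O},d)$ over successful attacks $\mathcal{O}$ on $T$ ($\infty$ if there are none). For a module $v$: $T^v$ is the DAT obtained from $T$ by deleting all nodes of $T_v$ other than $v$ (with their incident edges) and turning $v$ into a new leaf $\tilde v$ of type $\mathtt{BAS}$ (keeping its incoming edges and its position in the child orderings of its $\mathtt{SAND}$-parents); $d^v$ is the duration vector on the BASes of $T^v$ given by $d^v_a=d_a$ for $a\in N_{\mathtt{BAS}}\setminus B_v$ and $d^v_{\tilde v}=\mathrm{mt}(T_v,d|_{B_v})$. *)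

(* Defs.v *)
From HB Require Import structures.
From mathcomp Require Import all_boot all_order all_algebra.
From mathcomp Require Import boolp reals constructive_ereal.
Set Implicit Arguments. Unset Strict Implicit. Unset Printing Implicit Defensive.
Import Order.TTheory GRing.Theory Num.Theory.
Local Open Scope ring_scope.

Inductive gtype := BAS | OR | AND | SAND.
Definition is_bas (g : gtype) : bool := if g is BAS then true else false.

Section DAT.
Variable N : finType.

(* A DAT over the node universe N: node set, root, type of each node and the
   ordered list of children of each node (the list order is the SAND order). *)
Record dat := Dat {
  nodes : {set N};
  root : N;
  typ : N -> gtype;
  kids : N -> seq N }.

Definition edge (T : dat) : rel N := fun u w => (u \in nodes T) && (w \in kids T u).

Definition wf_dat (T : dat) : Prop :=
  root T \in nodes T /\
  [/\ (forall u, u \in nodes T -> {subset kids T u <= nodes T}),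
      (forall u, u \in nodes T -> uniq (kids T u)),
      (forall u, u \in nodes T -> (typ T u = BAS <-> kids T u = [::])),
      (forall u w, edge T u w -> ~~ connect (edge T) w u) &
      (forall u, u \in nodes T -> connect (edge T) (root T) u)].

Definition desc (T : dat) (u : N) : {set N} := [set w | connect (edge T) u w].
Definition bas (T : dat) : {set N} := [set u in nodes T | is_bas (typ T u)].
Definition Bset (T : dat) (u : N) : {set N} := desc T u :&: bas T.

Definition subdat (T : dat) (u : N) : dat :=
  Dat (desc T u) u (typ T) (kids T).

Definition is_module (T : dat) (v : N) : Prop :=
  [/\ v \in nodes T, ~~ is_bas (typ T v) &
      forall u w, edge T u w -> w \in desc T v -> w != v -> u \in desc T v].

(* T^v : delete the strict descendants of v and turn v into a leaf
   (the new leaf ~v is represented by the node name v itself). *)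
Definition quotdat (T : dat) (v : N) : dat :=
  Dat ((nodes T :\: desc T v) :|: [set v]) (root T)
      (fun u => if u == v then BAS else typ T u)
      (fun u => if u == v then [::] else kids T u).

Definition attack := ({set N} * {set N * N})%type.
Definition aset (O : attack) : {set N} := O.1.
Definition prec (O : attack) (a b : N) : bool := (a, b) \in O.2.

Definition is_attack (T : dat) (O : attack) : Prop :=
  [/\ aset O \subset bas T,
      O.2 \subset setX (aset O) (aset O),
      (forall a, a \in aset O -> ~~ prec O a a) &
      (forall a b c, a \in aset O -> b \in aset O -> c \in aset O ->
         prec O a b -> prec O b c -> prec O a c)].

Definition sand_ok (T : dat) (O : attack) (u : N) : Prop :=
  forall i, (i.+1 < size (kids T u))%N ->
  forall a a', a \in aset O -> a' \in aset O ->
    a \in Bset T (nth u (kids T u) i) -> a' \in Bset T (nth u (kids T u) i.+1) ->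
    prec O a a'.

(* O reaches node u (least fixpoint of the recursive definition; on a finite
   DAG this coincides with the recursive definition). *)
Inductive reaches (T : dat) (O : attack) : N -> Prop :=
| reach_bas u : typ T u = BAS -> u \in aset O -> reaches T O u
| reach_or u w : typ T u = OR -> w \in kids T u -> reaches T O w -> reaches T O u
| reach_and u : typ T u = AND -> (forall w, w \in kids T u -> reaches T O w) ->
    reaches T O u
| reach_sand u : typ T u = SAND -> (forall w, w \in kids T u -> reaches T O w) ->
    sand_ok T O u -> reaches T O u.

Definition successful (T : dat) (O : attack) : Prop :=
  is_attack T O /\ reaches T O (root T).

Definition chain (O : attack) (C : {set N}) : bool :=
  (C \subset aset O) &&
  [forall a in C, forall b in C, [|| a == b, prec O a b | prec O b a]].
Definition max_chain (O : attack) (C : {set N}) : bool :=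
  chain O C && [forall D : {set N}, (chain O D && (C \subset D)) ==> (D == C)].

Variable R : realType.

(* t(O, d) : maximum over maximal chains of the total duration (0 if A empty) *)
Definition attack_time (O : attack) (d : N -> R) : R :=
  \big[Num.max/0]_(C : {set N} | max_chain O C) \sum_(a in C) d a.

Definition min_time (T : dat) (d : N -> R) : \bar R :=
  \big[Order.min/+oo%E]_(O : attack | `[< successful T O >]) (attack_time O d)%:E.

Definition dur_quot (T : dat) (v : N) (d : N -> R) : N -> R :=
  fun a => if a == v then fine (min_time (subdat T v) d) else d a.

End DAT.

(* Main.v *)
Require Import Defs.
From HB Require Import structures.
From mathcomp Require Import all_boot all_order all_algebra.
From mathcomp Require Import boolp reals constructive_ereal.
Import Order.TTheory GRing.Theory Num.Theory.
Set Implicit Arguments. Unset Strict Implicit.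
Local Open Scope ring_scope.

Definition ctime (R : realType) (N : finType) (O : attack N) (w : N -> R) : R :=
  \big[Num.max/0]_(C : {set N} | chain O C) \sum_(a in C) w a.

Lemma ctime_ge (R : realType) (N : finType) (O : attack N) (w : N -> R) C :
  chain O C -> \sum_(a in C) w a <= ctime O w.
Proof. by move=> hC; rewrite /ctime (bigD1 C) //= le_max lexx. Qed.

Lemma ctime_le (R : realType) (N : finType) (O : attack N) (w : N -> R) X :
  0 <= X -> (forall C, chain O C -> \sum_(a in C) w a <= X) -> ctime O w <= X.
Proof.
move=> X0 H; rewrite /ctime; elim/big_ind: _ => //.
by move=> x y hx hy; rewrite ge_max hx hy.
Qed.

Lemma chain0 (N : finType) (O : attack N) : chain O set0.
Proof. by rewrite /chain sub0set; apply/forallP => a; rewrite in_set0. Qed.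

Lemma ctime_ge0 (R : realType) (N : finType) (O : attack N) (w : N -> R) :
  0 <= ctime O w.
Proof. by have := ctime_ge w (chain0 O); rewrite big_set0. Qed.

Lemma ctime_attained (R : realType) (N : finType) (O : attack N) (w : N -> R) :
  exists C, chain O C /\ ctime O w = \sum_(a in C) w a.
Proof.
have : ctime O w = 0 \/ exists C, chain O C /\ ctime O w = \sum_(a in C) w a.
  rewrite /ctime; elim/big_ind: _.
  - by left.
  - move=> x y hx hy; rewrite /Num.max; case: ifP => _; [exact: hy | exact: hx].
  - by move=> C hC; right; exists C.
case=> [->|//]; exists set0; by rewrite big_set0 chain0.
Qed.

Lemma attack_time_ge0 (R : realType) (N : finType) (O : attack N) (w : N -> R) :
  0 <= attack_time O w.
Proof.
rewrite /attack_time; elim/big_rec: _ => // i y _ hy.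
by rewrite le_max hy orbT.
Qed.

Lemma ext_max_chain (N : finType) (O : attack N) C : chain O C ->
  exists D, max_chain O D /\ C \subset D.
Proof.
move=> hC.
have P0 : (fun D => chain O D && (C \subset D)) C by rewrite /= hC subxx.
case: (@arg_maxnP _ C (fun D => chain O D && (C \subset D)) (fun D : {set N} => #|D|) P0) => D /andP[hD sCD] Hmax.
exists D; split=> //; rewrite /max_chain hD /=.
apply/forallP => D'; apply/implyP => /andP[hD' sDD'].
have := Hmax D'; rewrite hD' (subset_trans sCD sDD') => /(_ isT) le.
by rewrite eq_sym eqEcard sDD' /=; exact: le.
Qed.

Lemma sum_sub_le (R : realType) (N : finType) (w : N -> R) (C D : {set N}) :
  C \subset D -> (forall a, a \in D -> 0 <= w a) ->
  \sum_(a in C) w a <= \sum_(a in D) w a.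
Proof.
move=> sCD hw; rewrite [X in _ <= X](big_setID C) /= (setIidPr sCD) lerDl.
by apply: sumr_ge0 => a; rewrite in_setD => /andP[_]; apply: hw.
Qed.

Lemma attack_time_ctime (R : realType) (N : finType) (O : attack N) (w : N -> R) :
  (forall a, a \in aset O -> 0 <= w a) -> attack_time O w = ctime O w.
Proof.
move=> hw; apply/le_anti/andP; split.
- rewrite /attack_time; elim/big_ind: _.
  + exact: ctime_ge0.
  + by move=> x y hx hy; rewrite ge_max hx hy.
  + by move=> C /andP[hC _]; apply: ctime_ge.
- apply: ctime_le; first exact: attack_time_ge0.
  move=> C hC; case: (ext_max_chain hC) => D [hD sCD].
  have hD0 : forall a, a \in D -> 0 <= w a.
    move=> a aD; apply: hw; move: hD => /andP[/andP[sD _] _].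
    exact: (subsetP sD).
  apply: (le_trans (sum_sub_le sCD hD0)).
  by rewrite /attack_time (bigD1 D) //= le_max lexx.
Qed.

Lemma connect_nodes (N : finType) (T : dat N) x y : wf_dat T ->
  x \in nodes T -> connect (edge T) x y -> y \in nodes T.
Proof.
move=> [_ [hk _ _ _ _]] hx /connectP[p hp ->]; elim: p x hx hp => //= z p IH x hx.
case/andP=> /andP[_ hz] hp; apply: IH hp; exact: (hk x hx).
Qed.

Lemma sub_connect (N : finType) (T : dat N) v x y :
  x \in desc T v -> connect (edge T) x y -> connect (edge (subdat T v)) x y.
Proof.
move=> hx /connectP[p hp ->]; elim: p x hx hp => //= z p IH x hx.
case/andP=> /andP[hxn hz] hp.
have hzd : z \in desc T v.
  move: hx; rewrite !inE => hx; apply: (connect_trans hx); apply: connect1.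
  by rewrite /edge hxn.
apply: (connect_trans (y := z)); last exact: IH.
by apply: connect1; rewrite /edge /= hx.
Qed.

Lemma sub_connect' (N : finType) (T : dat N) v x y : wf_dat T -> v \in nodes T ->
  connect (edge (subdat T v)) x y -> connect (edge T) x y.
Proof.
move=> wf hv; apply: connect_sub => a b /andP[/= ha hb]; apply: connect1.
rewrite /edge hb andbT; apply: (connect_nodes wf hv); by rewrite inE in ha.
Qed.

Lemma quot_connect (N : finType) (T : dat N) v x y :
  is_module T v -> x \notin desc T v -> connect (edge T) x y ->
  connect (edge (quotdat T v)) x (if y \in desc T v then v else y).
Proof.
move=> [hv _ hmod] hx /connectP[p hp ->]; elim: p x hx hp => /= [|z p IH] x hx.
  by rewrite (negbTE hx).
case/andP=> hxz hp.
have hvd : v \in desc T v by rewrite inE connect0.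
have xv : x != v by apply: contraNneq hx => ->.
have hxq : x \in nodes (quotdat T v).
  by move: hxz => /andP[hxn _]; rewrite /= in_setU in_setD hx hxn.
case hz : (z \in desc T v).
- have zv : z = v.
    apply/eqP; apply: contraNT hx => zv; exact: (hmod x z hxz hz zv).
  have -> : last z p \in desc T v.
    move: hz; rewrite !inE => hz; apply: (connect_trans hz).
    by apply/connectP; exists p.
  apply: connect1; rewrite /edge hxq /= (negbTE xv) -zv.
  by move: hxz => /andP[].
- apply: (connect_trans (y := z)); last by apply: IH => //; rewrite hz.
  apply: connect1; rewrite /edge hxq /= (negbTE xv).
  by move: hxz => /andP[].
Qed.

Lemma desc_kid (N : finType) (T : dat N) v u w : wf_dat T -> v \in nodes T ->
  u \in desc T v -> w \in kids T u -> w \in desc T v.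
Proof.
move=> wf hv; rewrite !inE => hu hw; apply: (connect_trans hu); apply: connect1.
by rewrite /edge hw (connect_nodes wf hv hu).
Qed.

Lemma reach_sub (N : finType) (T : dat N) v (Ov O' : attack N) u :
  wf_dat T -> v \in nodes T ->
  {subset aset Ov <= aset O'} ->
  (forall a b, a \in aset Ov -> b \in aset Ov -> prec Ov a b -> prec O' a b) ->
  (forall a, a \in aset O' -> a \in desc T v -> a \in aset Ov) ->
  reaches (subdat T v) Ov u -> u \in desc T v -> reaches T O' u.
Proof.
move=> wf hv hsub hprec hback; elim=> {u} /=.
- by move=> u hu hA _; apply: reach_bas => //; apply: hsub.
- move=> u w ht hw _ IH hu; apply: (reach_or ht hw); apply: IH.
  exact: (desc_kid wf hv hu hw).
- move=> u ht _ IH hu; apply: reach_and => // w hw; apply: IH => //.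
  exact: (desc_kid wf hv hu hw).
- move=> u ht _ IH hsand hu; apply: reach_sand => //.
    by move=> w hw; apply: IH => //; exact: (desc_kid wf hv hu hw).
  move=> i hi a a' ha ha' hBa hBa'.
  have hi' : (i < size (kids T u))%N by apply: ltnW.
  have hw := desc_kid wf hv hu (mem_nth u hi').
  have hw' := desc_kid wf hv hu (mem_nth u hi).
  have inB : forall x w, w \in desc T v -> x \in Bset T w ->
      x \in aset O' -> x \in aset Ov /\ x \in Bset (subdat T v) w.
    move=> x w0 hw0; rewrite /Bset /bas !inE => /andP[hc /andP[_ hb]] hx.
    have hxd : x \in desc T v by move: hw0; rewrite inE => hw0; rewrite inE (connect_trans hw0 hc).
    split; first exact: hback.
    move: (hxd); rewrite inE => ->; rewrite hb !andbT /=; exact: sub_connect.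
  case: (inB _ _ hw hBa ha) => ha1 ha2; case: (inB _ _ hw' hBa' ha') => ha1' ha2'.
  apply: hprec => //; exact: (hsand i hi a a').
Qed.

Lemma reach_quot (N : finType) (T : dat N) v (O O' : attack N) u :
  wf_dat T -> is_module T v -> is_attack (quotdat T v) O ->
  (v \in aset O -> reaches T O' v) ->
  (forall a, a \in aset O -> a != v -> a \in aset O') ->
  (forall a, a \in aset O' -> (if a \in desc T v then v else a) \in aset O) ->
  (forall a b, a \in aset O' -> b \in aset O' ->
     prec O (if a \in desc T v then v else a) (if b \in desc T v then v else b) ->
     prec O' a b) ->
  reaches (quotdat T v) O u -> u \in nodes (quotdat T v) -> reaches T O' u.
Proof.
move=> wf hmod [hAq _ _ _] hvr hA hf hprec.
have [hv _ hm] := hmod.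
have [_ [hk _ _ _ _]] := wf.
have hvd : v \in desc T v by rewrite inE connect0.
have nq : forall u, u \in nodes (quotdat T v) -> u != v ->
    u \in nodes T /\ u \notin desc T v.
  move=> x; rewrite /= in_setU in_setD in_set1 => /orP[/andP[-> ->]//|->//].
have kq : forall u w, u \in nodes (quotdat T v) -> u != v -> w \in kids T u ->
    w \in nodes (quotdat T v).
  move=> x w hx xv hw; have [hxn hxd] := nq x hx xv.
  rewrite /= in_setU in_setD in_set1 (hk x hxn w hw) andbT.
  case: (eqVneq w v) => [->|wv]; first by rewrite orbT.
  rewrite orbF; apply: contra hxd => hwd; apply: (hm x w) => //.
  by rewrite /edge hxn.
elim=> {u} /=.
- move=> u; case: (eqVneq u v) => [-> _ hvA _|uv ht hu _]; first exact: hvr.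
  by apply: reach_bas; [exact: ht | apply: hA].
- move=> u w; case: (eqVneq u v) => [//|uv] ht hw _ IH hu.
  apply: (reach_or ht hw); exact: IH (kq _ _ hu uv hw).
- move=> u; case: (eqVneq u v) => [//|uv] ht _ IH hu.
  by apply: reach_and => // w hw; exact: IH (kq _ _ hu uv hw).
- move=> u; case: (eqVneq u v) => [//|uv] ht _ IH hsand hu.
  apply: reach_sand => //.
    by move=> w hw; exact: IH (kq _ _ hu uv hw).
  move: hsand; rewrite /sand_ok /= (negbTE uv) => hsand.
  move=> i hi a a' ha ha' hBa hBa'.
  have hi' : (i < size (kids T u))%N by apply: ltnW.
  have inB : forall x w, w \in kids T u -> x \in Bset T w -> x \in aset O' ->
      (if x \in desc T v then v else x) \in Bset (quotdat T v) w.
    move=> x w hw hB hx; have hwq := kq _ _ hu uv hw.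
    rewrite /Bset in_setI; apply/andP; split; last exact: (subsetP hAq _ (hf _ hx)).
    move: hB; rewrite /Bset in_setI => /andP[hc _].
    case: (eqVneq w v) => [ewv|wv].
      move: hc; rewrite ewv => hc; rewrite hc inE; exact: connect0.
    have [_ hwd] := nq w hwq wv; rewrite inE; apply: quot_connect => //.
    by rewrite inE in hc.
  apply: hprec => //; apply: (hsand i hi) => //.
  + exact: hf.
  + exact: hf.
  + exact: inB (mem_nth u hi') hBa ha.
  + exact: inB (mem_nth u hi) hBa' ha'.
Qed.

Lemma min_time_attained (R : realType) (N : finType) (T : dat N) (d : N -> R) :
  (min_time T d < +oo)%E ->
  exists O, successful T O /\ min_time T d = (attack_time O d)%:E.
Proof.
have : min_time T d = +oo%E \/
    exists O, successful T O /\ min_time T d = (attack_time O d)%:E.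
  rewrite /min_time; elim/big_ind: _.
  - by left.
  - move=> x y hx hy; rewrite /Order.min; case: ifP => _; [exact: hx | exact: hy].
  - by move=> O /asboolP hO; right; exists O.
by case=> [->|//]; rewrite ltxx.
Qed.

Lemma chainI (N : finType) (O : attack N) (C : {set N}) :
  {subset C <= aset O} ->
  (forall a b, a \in C -> b \in C -> [|| a == b, prec O a b | prec O b a]) ->
  chain O C.
Proof.
move=> hs hc; apply/andP; split; first by apply/subsetP.
apply/forallP=> a; apply/implyP=> ha; apply/forallP=> b; apply/implyP=> hb.
exact: hc.
Qed.

Lemma chainE (N : finType) (O : attack N) (C : {set N}) : chain O C ->
  {subset C <= aset O} /\
  (forall a b, a \in C -> b \in C -> [|| a == b, prec O a b | prec O b a]).
Proof.
case/andP=> /subsetP hs /forallP hc; split=> // a b ha hb.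
by move: (hc a) => /implyP/(_ ha)/forallP/(_ b)/implyP/(_ hb).
Qed.

Lemma eqle (R : realType) (x y : R) : x = y -> x <= y.
Proof. by move->. Qed.

Theorem mainTheorem10 (R : realType) (N : finType) (T : dat N) (d : N -> R) (v : N) :
  wf_dat T ->
  (forall a, a \in bas T -> 0 <= d a) ->
  is_module T v ->
  (min_time (subdat T v) d < +oo)%E ->
  forall O : attack N, successful (quotdat T v) O ->
  exists O' : attack N, successful T O' /\
    attack_time O' d = attack_time O (dur_quot T v d).
Proof.
move=> wf hd hmod hmt O [hOatt hOr].
have [hv hvnb hm] := hmod.
have [hroot [hk huniq hbas hacyc hconn]] := wf.
have hvd : v \in desc T v by rewrite inE connect0.
case: (min_time_attained hmt) => Ov [[hOvatt hOvr] hmtE].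
have [hOsub hO2 hOirr hOtr] := hOatt.
have [hOvsub hOv2 hOvirr hOvtr] := hOvatt.
pose fv := fun x => if x \in desc T v then v else x.
pose A' := [set x | ((x \in aset O) && (x != v)) || ((x \in aset Ov) && (v \in aset O))].
pose P' := [set p : N * N | [&& p.1 \in A', p.2 \in A' &
   if (p.1 \in desc T v) && (p.2 \in desc T v) then prec Ov p.1 p.2
   else prec O (fv p.1) (fv p.2)]].
pose O' : attack N := (A', P').
have hA1 : forall a, a \in aset O -> a != v ->
    [/\ a \in nodes T, a \notin desc T v & a \in bas T].
  move=> a ha av; move: (subsetP hOsub a ha).
  rewrite /bas in_set /= !in_setU !in_setD in_set1 (negbTE av) /= orbF.
  move=> /andP[/andP[h1 h2] hb]; split => //; by rewrite /bas inE h2 hb.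
have hAv : forall a, a \in aset Ov -> a \in desc T v /\ a \in bas T.
  move=> a ha; move: (subsetP hOvsub a ha); rewrite /bas !inE /= => /andP[hc hb].
  by split=> //; rewrite hb andbT (connect_nodes wf hv hc).
have hA'in : forall a, a \in A' -> a \in desc T v -> a \in aset Ov /\ v \in aset O.
  move=> a; rewrite inE => /orP[/andP[ha av] hda|/andP[]//].
  by case: (hA1 a ha av) => _ /negP.
have hA'out : forall a, a \in A' -> a \notin desc T v -> a \in aset O /\ a != v.
  move=> a; rewrite inE => /orP[/andP[]//|/andP[ha _] hda].
  by case: (hAv a ha) => hh _; rewrite hh in hda.
have hf : forall a, a \in A' -> fv a \in aset O.
  move=> a ha; rewrite /fv; case: ifP => hda.
    by case: (hA'in a ha hda).
  by case: (hA'out a ha (negbT hda)).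
have precE : forall a b, prec O' a b = [&& a \in A', b \in A' &
   if (a \in desc T v) && (b \in desc T v) then prec Ov a b
   else prec O (fv a) (fv b)].
  by move=> a b; rewrite /prec inE.
have hA'bas : forall a, a \in A' -> a \in bas T.
  move=> a ha; case: (boolP (a \in desc T v)) => hda.
    by case: (hAv a (hA'in a ha hda).1).
  by case: (hA'out a ha hda) => h1 h2; case: (hA1 a h1 h2).
have hirr' : forall a, a \in A' -> ~~ prec O' a a.
  move=> a ha; rewrite precE ha andbb /=; case: ifP => hda.
    exact: hOvirr (hA'in a ha hda).1.
  rewrite /fv hda; exact: hOirr (hA'out a ha (negbT hda)).1.
have htr' : forall a b c, a \in A' -> b \in A' -> c \in A' ->
    prec O' a b -> prec O' b c -> prec O' a c.
  move=> a b c ha hb hc; rewrite !precE ha hb hc /=.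
  have Ha := hf a ha; have Hb := hf b hb; have Hc := hf c hc.
  case da : (a \in desc T v); case db : (b \in desc T v);
  case dc : (c \in desc T v);
  rewrite /= /fv ?da ?db ?dc /= in Ha Hb Hc *.
  - apply: hOvtr; [exact: (hA'in a ha da).1|exact: (hA'in b hb db).1|exact: (hA'in c hc dc).1].
  - by move=> _.
  - by move=> h1 h2; have := hOirr _ Ha; rewrite (hOtr _ _ _ Ha Hb Ha h1 h2).
  - exact: hOtr.
  - by move=> h1 _.
  - exact: hOtr.
  - exact: hOtr.
  - exact: hOtr.
have hatt' : is_attack T O'.
  split.
  - by apply/subsetP.
  - apply/subsetP => -[x y]; rewrite /= inE /= => /and3P[hx hy _].
    by rewrite in_setX hx hy.
  - exact: hirr'.
  - exact: htr'.
have hsucc : successful T O'.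
  split=> //.
  have hrq : Defs.root T \in nodes (quotdat T v).
    rewrite /= in_setU in_setD in_set1 hroot andbT.
    case: (eqVneq (Defs.root T) v) => [_|rv]; first by rewrite orbT.
    rewrite orbF; apply/negP; rewrite inE => hvr.
    move: (hconn v hv) => /connectP[[|z p] /= hp hlast].
      by move: rv; rewrite hlast eqxx.
    case/andP: hp => he hp.
    have hzv : connect (edge T) z v by apply/connectP; exists p.
    by move: (hacyc _ _ he); rewrite (connect_trans hzv hvr).
  apply: (reach_quot (O := O) wf hmod hOatt) hOr hrq.
  - move=> hvA; apply: (reach_sub (Ov := Ov) wf hv) hOvr hvd.
    + by move=> a ha; rewrite inE ha hvA orbT.
    + move=> a b ha hb hab; rewrite precE (hAv a ha).1 (hAv b hb).1 /= hab andbT.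
      by rewrite !inE ha hb hvA !orbT.
    + by move=> a ha hda; case: (hA'in a ha hda).
  - by move=> a ha av; rewrite inE ha av.
  - exact: hf.
  - move=> a b ha hb h; rewrite precE ha hb /=; case: ifP => // /andP[da db].
    move: h; rewrite da db => h; have Hv := (hA'in a ha da).2.
    by move: (hOirr _ Hv); rewrite h.
exists O'; split=> //.
pose m := attack_time Ov d.
have hw : forall a, dur_quot T v d a = if a == v then m else d a.
  by move=> a; rewrite /dur_quot hmtE.
have hm0 : 0 <= m by apply: attack_time_ge0.
have hmc : m = ctime Ov d.
  by apply: attack_time_ctime => a ha; apply: hd; case: (hAv a ha).
rewrite (attack_time_ctime (O := O')); last by move=> a ha; apply: hd; apply: hA'bas.
rewrite (attack_time_ctime (O := O)); last first.
  move=> a ha; rewrite hw; case: eqP => // /eqP av; apply: hd.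
  by case: (hA1 a ha av).
have cmpF : forall a b, a \in A' -> b \in A' ->
    [|| a == b, prec O' a b | prec O' b a] ->
    [|| fv a == fv b, prec O (fv a) (fv b) | prec O (fv b) (fv a)].
  move=> a b ha hb; case/or3P => [/eqP <-|h|h]; first by rewrite eqxx.
  - move: h; rewrite precE ha hb /=; case: ifP => [/andP[da db] _|_ ->].
      by rewrite /fv da db eqxx.
    by rewrite orbT.
  - move: h; rewrite precE ha hb /=; case: ifP => [/andP[da db] _|_ ->].
      by rewrite /fv da db eqxx.
    by rewrite !orbT.
have cmpB : forall a b, a \in A' -> b \in A' -> ~~ ((a \in desc T v) && (b \in desc T v)) ->
    [|| fv a == fv b, prec O (fv a) (fv b) | prec O (fv b) (fv a)] ->
    [|| a == b, prec O' a b | prec O' b a].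
  move=> a b ha hb nd; rewrite !precE ha hb /= (negbTE nd) andbC (negbTE nd).
  case/or3P => [e|->|->]; rewrite ?orbT //; apply/orP; left.
  move: e nd; rewrite /fv.
  case da : (a \in desc T v); case db : (b \in desc T v) => //= e _.
  - by have [_] := hA'out b hb (negbT db); rewrite eq_sym e.
  - by have [_] := hA'out a ha (negbT da); rewrite e.
have hwd : forall a, a != v -> dur_quot T v d a = d a.
  by move=> a av; rewrite hw (negbTE av).
apply/le_anti/andP; split.
- apply: ctime_le; first exact: ctime_ge0.
  move=> C' hC'; have [hC's hC'c] := chainE hC'.
  have chainMap : forall C : {set N},
      (forall x, x \in C -> exists2 y, y \in C' & x = fv y) -> chain O C.
    move=> C hC; apply: chainI.
      by move=> x /hC [y hy ->]; apply: hf; apply: hC's.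
    move=> x y /hC [x' hx' ->] /hC [y' hy' ->]; apply: cmpF; try exact: hC's.
    exact: hC'c.
  case: (boolP [exists s, (s \in C') && (s \in desc T v)]).
  + case/existsP => s /andP[hs hsd].
    pose C := v |: (C' :\: desc T v).
    have hC : chain O C.
      apply: chainMap => x; rewrite in_setU1 in_setD => /orP[/eqP ->|/andP[hxd hx]].
        by exists s => //; rewrite /fv hsd.
      by exists x => //; rewrite /fv (negbTE hxd).
    have hS : chain Ov (C' :&: desc T v).
      apply: chainI.
        by move=> x; rewrite in_setI => /andP[hx hxd]; case: (hA'in x (hC's x hx) hxd).
      move=> x y; rewrite !in_setI => /andP[hx hxd] /andP[hy hyd].
      by move: (hC'c x y hx hy); rewrite !precE (hC's x hx) (hC's y hy) hxd hyd.
    apply: (le_trans _ (ctime_ge _ hC)).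
    rewrite (big_setID (desc T v)) /= /C big_setU1; last by rewrite in_setD hvd.
    rewrite hw eqxx hmc; apply: lerD; first exact: ctime_ge.
    apply/eqle/eq_bigr => x; rewrite in_setD => /andP[hxd _].
    rewrite hwd //; apply: contraNneq hxd => ->; exact: hvd.
  + rewrite negb_exists => /forallP hno.
    have hnd : forall x, x \in C' -> x \notin desc T v.
      by move=> x hx; move: (hno x); rewrite hx.
    have hC : chain O C'.
      apply: chainMap => x hx; exists x => //; by rewrite /fv (negbTE (hnd x hx)).
    apply: (le_trans _ (ctime_ge _ hC)); apply/eqle/eq_bigr => x hx.
    by rewrite hwd //; case: (hA'out x (hC's x hx) (hnd x hx)).
- apply: ctime_le; first exact: ctime_ge0.
  move=> C hC; have [hCs hCc] := chainE hC.
  have chainBack : forall (C' D : {set N}), chain Ov D -> {subset C' <= A'} ->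
      (forall a, a \in C' -> a \in desc T v -> a \in D) ->
      (forall a, a \in C' -> fv a \in C) -> chain O' C'.
    move=> C' D hD hC'A hC'D hC'f; have [hDs hDc] := chainE hD.
    apply: chainI => // a b ha hb.
    case: (boolP ((a \in desc T v) && (b \in desc T v))) => [/andP[da db]|nd].
      rewrite !precE !hC'A // da db /=; exact: hDc (hC'D a ha da) (hC'D b hb db).
    apply: cmpB => //; try exact: hC'A.
    exact: hCc (hC'f a ha) (hC'f b hb).
  have hCout : forall a, a \in C -> a != v -> a \in A' /\ a \notin desc T v.
    move=> a ha av; have hA := hCs a ha; case: (hA1 a hA av) => _ hnd _.
    by rewrite inE hA av.
  case: (boolP (v \in C)) => hvC.
  + have [D [hD hDsum]] := ctime_attained Ov d.
    have [hDs _] := chainE hD.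
    pose C' := D :|: (C :\ v).
    have hC' : chain O' C'.
      apply: (chainBack C' D hD).
      * move=> a; rewrite in_setU in_setD1 => /orP[haD|/andP[av haC]].
          by rewrite inE (hDs a haD) (hCs v hvC) orbT.
        by case: (hCout a haC av).
      * move=> a; rewrite in_setU in_setD1 => /orP[//|/andP[av haC]] hda.
        by case: (hCout a haC av) => _; rewrite hda.
      * move=> a; rewrite in_setU in_setD1 => /orP[haD|/andP[av haC]].
          by rewrite /fv (hAv a (hDs a haD)).1.
        by case: (hCout a haC av) => _ hnd; rewrite /fv (negbTE hnd).
    apply: (le_trans _ (ctime_ge _ hC')); apply: eqle.
    rewrite (big_setD1 v hvC) /= hw eqxx hmc hDsum.
    rewrite [in RHS](big_setID (desc T v)) /=; congr (_ + _).
      apply: eq_bigl => x; rewrite in_setI in_setU in_setD1.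
      case hxD : (x \in D); first by rewrite /= (hAv x (hDs x hxD)).1.
      rewrite /=; case hxC : (x \in C); rewrite ?andbF ?andFb //.
      case: (eqVneq x v) => [//|xv] /=.
      by case: (hCout x hxC xv) => _ /negbTE.
    apply: eq_big => x.
      rewrite /C' !inE; case hxD : (x \in D).
        have hxd := (hAv x (hDs x hxD)).1; move: (hxd); rewrite inE => -> /=.
        case hxC : (x \in C); rewrite ?andbF //; case: (eqVneq x v) => //= xv.
        by case: (hCout x hxC xv) => _; rewrite hxd.
      rewrite /=; case hxC : (x \in C); rewrite ?andbF //=.
      case: (eqVneq x v) => [_|xv] /=; first by rewrite andbF.
      by case: (hCout x hxC xv) => _; rewrite inE andbT => ->.
    by rewrite in_setD1 => /andP[xv _]; rewrite hwd.
  + have hC' : chain O' C.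
      apply: (chainBack C set0 (chain0 Ov)).
      * move=> a ha; have av : a != v by apply: contraNneq hvC => <-.
        by case: (hCout a ha av).
      * move=> a ha hda; have av : a != v by apply: contraNneq hvC => <-.
        by case: (hCout a ha av) => _; rewrite hda.
      * move=> a ha; have av : a != v by apply: contraNneq hvC => <-.
        by case: (hCout a ha av) => _ hnd; rewrite /fv (negbTE hnd).
    apply: (le_trans _ (ctime_ge _ hC')); apply/eqle/eq_bigr => x hx.
    by rewrite hwd //; apply: contraNneq hvC => <-.
Qed.
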